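(* Let $p,q\geq0$ be integers with $(p,q)\notin\{(1,0),(0,1),(1,1)\}$. Then $\beta_{p,q}(D)\neq0$ for every real $D>4$, where $$\beta_{p,q}(D)=\frac{(-1)^q2^p}{D^q[(D-1)(D-2)]^p}\Big[(-1)^{p+q}2^{p+q-1}(D-2)(D-3)+2^{1-q}(D-2)(D-3)^p(D-4)^q+(-1)^p(D-2)^{p+q}(D-3)^p\Big].$$ *)

(* Defs.v *)
From Stdlib Require Import Reals ZArith.
Open Scope R_scope.

(* beta_{p,q}(D) as in the paper; integer exponents of 2 (which may be
   negative, e.g. 2^{p+q-1} for p=q=0, 2^{1-q} for q>=2) use powerRZ. *)
Definition beta (p q : nat) (D : R) : R :=
  ((-1) ^ q * 2 ^ p) / (D ^ q * ((D - 1) * (D - 2)) ^ p) *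
  ( (-1) ^ (p + q) * powerRZ 2 (Z.of_nat p + Z.of_nat q - 1) * (D - 2) * (D - 3)
  + powerRZ 2 (1 - Z.of_nat q) * (D - 2) * (D - 3) ^ p * (D - 4) ^ q
  + (-1) ^ p * (D - 2) ^ (p + q) * (D - 3) ^ p ).

(* Main.v *)
Require Import Defs.
From Stdlib Require Import Lra Lia.
From Stdlib Require Import Reals ZArith.
Open Scope R_scope.
Lemma W' (b : R) (m q : nat) : 0 < b -> (1 <= q)%nat ->
  2 ^ (m + q) + b ^ q <= (b + 2) ^ (m + q).
Proof.
  intros Hb Hq. induction m as [|m IH].
  - simpl. destruct q as [|q]; [lia|]. clear Hq. induction q as [|q IHq].
    + simpl. lra.
    + change ((b+2)^(S (S q))) with ((b+2)*(b+2)^(S q)).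
      change (2^(S (S q))) with (2*2^(S q)).
      change (b^(S (S q))) with (b*b^(S q)).
      assert (0 < 2^(S q)) by (apply pow_lt; lra).
      assert (0 < b^(S q)) by (apply pow_lt; lra).
      nra.
  - change (S m + q)%nat with (S (m+q)).
    simpl.
    assert (0 < 2^(m+q)) by (apply pow_lt; lra).
    assert (0 < b^q) by (apply pow_lt; lra).
    nra.
Qed.

Lemma S1 (b : R) (m q : nat) : 0 < b -> (1 <= q)%nat ->
  2 ^ S (m + q) + b ^ q < (b + 2) ^ S (m + q).
Proof.
  intros Hb Hq. pose proof (W' b m q Hb Hq). simpl.
  assert (0 < 2^(m+q)) by (apply pow_lt; lra).
  assert (0 < b^q) by (apply pow_lt; lra).
  nra.
Qed.

Lemma S2 (b : R) (q : nat) : 0 < b -> (1 <= q)%nat ->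
  2 ^ S q + b ^ S q < (b + 2) ^ S q.
Proof.
  intros Hb Hq. pose proof (W' b 0 q Hb Hq). simpl in *.
  assert (0 < 2^q) by (apply pow_lt; lra).
  assert (0 < b^q) by (apply pow_lt; lra).
  nra.
Qed.

Lemma core (p q n : nat) (b C : R) : (p + q = S n)%nat -> 0 < b ->
  ~ (p = 1%nat /\ q = 0%nat) -> ~ (p = 0%nat /\ q = 1%nat) -> ~ (p = 1%nat /\ q = 1%nat) ->
  0 < C -> ((1 <= q)%nat -> C <= 1) -> (q = 0%nat -> C = 2) ->
  (-1) ^ (p + q) * 2 ^ n * (b + 1) + C * (b + 1) ^ p * b ^ q
  + (-1) ^ p * (b + 2) ^ n * (b + 1) ^ p <> 0.
Proof.
  intros Hn Hb H10 H01 H11 HC HC1 HC0.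
  assert (P2 : 0 < 2 ^ n) by (apply pow_lt; lra).
  assert (Pb2 : 0 < (b+2) ^ n) by (apply pow_lt; lra).
  assert (Pb1 : 0 < (b+1) ^ p) by (apply pow_lt; lra).
  assert (Pbq : 0 < b ^ q) by (apply pow_lt; lra).
  assert (Hp1 : b + 1 <= (b+1)^p \/ p = 0%nat).
  { destruct p as [|p]; [now right|left]. rewrite <- (pow_1 (b+1)) at 1.
    apply Rle_pow; lia || lra. }
  assert (Hbig : 2 ^ n <= (b+2)^n) by (apply pow_incr; lra).
  destruct (Nat.Even_or_Odd p) as [[k Hk]|[k Hk]];
  destruct (Nat.Even_or_Odd q) as [[j Hj]|[j Hj]].
  -
    replace (p+q)%nat with (2*(k+j))%nat by lia. rewrite Hk, !pow_1_even, <- Hk.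
    assert (0 < C * (b+1)^p * b^q) by (apply Rmult_lt_0_compat; [apply Rmult_lt_0_compat|]; lra).
    assert (0 < (b+2)^n * (b+1)^p) by (apply Rmult_lt_0_compat; lra).
    nra.
  -
    replace (p+q)%nat with (S (2*(k+j)))%nat by lia. rewrite Hk, pow_1_even, pow_1_odd, <- Hk.
    assert (0 < C * (b+1)^p * b^q) by (apply Rmult_lt_0_compat; [apply Rmult_lt_0_compat|]; lra).
    assert (2^n * (b+1) <= (b+2)^n * (b+1)^p).
    { destruct Hp1 as [Hp1|Hp0].
      - apply Rmult_le_compat; lra.
      - subst p. assert (k = 0%nat) by lia. subst k.
        destruct n as [|[|m]]; [lia|lia|].
        change (2 ^ S (S m)) with (2*(2*2^m)). change ((b+2) ^ S (S m)) with ((b+2)*((b+2)*(b+2)^m)).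
        simpl. assert (2^m <= (b+2)^m) by (apply pow_incr; lra).
        assert (0 < 2^m) by (apply pow_lt; lra). nra. }
    nra.
  -
    replace (p+q)%nat with (S (2*(k+j)))%nat by lia. rewrite pow_1_odd.
    replace ((-1)^p) with (-1) by (rewrite Hk, Nat.add_1_r; symmetry; apply pow_1_odd).
    assert (C * b^q <= (b+2)^n).
    { destruct q as [|q].
      - rewrite HC0 by reflexivity. simpl. destruct n as [|[|m]]; [lia|lia|].
        assert (4 <= 2 ^ S (S m)). { simpl. assert (1 <= 2^m) by (apply pow_R1_Rle; lra). nra. }
        lra.
      - assert (C <= 1) by (apply HC1; lia).
        assert (b^S q <= (b+2)^S q) by (apply pow_incr; lra).
        assert ((b+2)^S q <= (b+2)^n) by (apply Rle_pow; lra || lia).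
        nra. }
    assert (C * (b+1)^p * b^q <= (b+2)^n * (b+1)^p) by nra.
    assert (0 < 2^n * (b+1)) by nra.
    nra.
  -
    replace (p+q)%nat with (2*(k+j+1))%nat by lia. rewrite pow_1_even.
    replace ((-1)^p) with (-1) by (rewrite Hk, Nat.add_1_r; symmetry; apply pow_1_odd).
    assert (C <= 1) by (apply HC1; lia).
    assert (HS : 2^n + b^q < (b+2)^n).
    { destruct k as [|k].
      - assert (n = q) by lia. subst n. destruct q as [|q]; [lia|].
        assert (q <> 0%nat) by (intro; subst; apply H11; split; lia).
        pose proof (S2 b q Hb ltac:(lia)). lra.
      - replace n with (S ((S (2*k)) + q))%nat by lia. apply S1; lra || lia. }
    destruct Hp1 as [Hp1|]; [|lia].
    assert (2^n*(b+1) <= 2^n*(b+1)^p) by nra.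
    assert (C*(b+1)^p*b^q <= (b+1)^p*b^q).
    { rewrite Rmult_assoc. assert (0<(b+1)^p*b^q) by (apply Rmult_lt_0_compat; lra).
      set (X := (b+1)^p*b^q) in *. nra. }
    assert (2^n*(b+1)^p + (b+1)^p*b^q < (b+2)^n*(b+1)^p) by nra.
    nra.
Qed.

Theorem mainTheorem7 (p q : nat) :
  ~ (p = 1%nat /\ q = 0%nat) -> ~ (p = 0%nat /\ q = 1%nat) -> ~ (p = 1%nat /\ q = 1%nat) ->
  forall D : R, D > 4 -> beta p q D <> 0.
Proof.
  intros H10 H01 H11 D HD. unfold beta.
  assert (Hpre : (-1) ^ q * 2 ^ p / (D ^ q * ((D - 1) * (D - 2)) ^ p) <> 0).
  { assert ((-1)^q <> 0) by (apply pow_nonzero; lra).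
    assert (2^p <> 0) by (apply pow_nonzero; lra).
    assert (D^q <> 0) by (apply pow_nonzero; lra).
    assert (((D - 1) * (D - 2)) ^ p <> 0) by (apply pow_nonzero; nra).
    unfold Rdiv. repeat apply Rmult_integral_contrapositive_currified; auto.
    apply Rinv_neq_0_compat. apply Rmult_integral_contrapositive_currified; auto. }
  apply Rmult_integral_contrapositive_currified; [exact Hpre|].
  set (C := powerRZ 2 (1 - Z.of_nat q)).
  assert (HC2 : C * 2 ^ q = 2).
  { unfold C. rewrite pow_powerRZ, <- powerRZ_add by lra.
    replace (1 - Z.of_nat q + Z.of_nat q)%Z with 1%Z by lia. simpl. ring. }
  assert (HCpos : 0 < C) by (unfold C; apply powerRZ_lt; lra).
  destruct (p + q)%nat as [|n] eqn:Hn.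
  - assert (p = 0%nat) by lia. assert (q = 0%nat) by lia. subst p q.
    simpl. simpl in HC2. nra.
  - replace (Z.of_nat p + Z.of_nat q - 1)%Z with (Z.of_nat n) by lia.
    rewrite <- pow_powerRZ.
    assert (E : (D-2)^(S n) = (D-2)*(D-2)^n) by reflexivity.
    rewrite E.
    pose proof (core p q n (D-4) C ltac:(lia) ltac:(lra) H10 H01 H11 HCpos) as Hc.
    assert (HC1 : (1 <= q)%nat -> C <= 1).
    { intro Hq. assert (2 <= 2^q).
      { rewrite <- (pow_1 2) at 1. apply Rle_pow; lra || lia. }
      nra. }
    assert (HC0 : q = 0%nat -> C = 2) by (intro; subst q; simpl in HC2; lra).
    specialize (Hc HC1 HC0). rewrite Hn in Hc.
    replace (D-3) with (D-4+1) by ring. replace (D-2) with (D-4+2) by ring.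
    intro H0. apply Hc.
    apply (Rmult_eq_reg_l (D-4+2)); [|lra]. rewrite Rmult_0_r. rewrite <- H0.
    ring.
Qed.
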